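(* Let $X=\{x_1,\dots,x_n\}$ be a set of Boolean variables and $\mathcal{C}=\{C_1,\dots,C_m\}$ a set of clauses, each consisting of exactly three positive literals. Let $G'$ be the graph constructed from $(\mathcal{C},X)$ as described in the context. Then there is a truth assignment for $X$ such that every clause contains at least one true literal and at least one false literal if and only if $G'$ has a $5$-colouring.
   Context: First construct $(G,L)$: for each $x_i\in X$ introduce two adjacent vertices $x_i$ and $\overline{x}_i$ with $L(x_i)=L(\overline{x}_i)=\{4,5\}$. For each clause $C_j$ introduce two vertices $C_j,C_j'$ with $L(C_j)=L(C_j')=\{1,2,3\}$. Add an edge between every vertex of the form $x_i$ or $\overline{x}_i$ and every vertex of the form $C_j$ or $C_j'$. For each clause $C_j$, fix an order of its literals, say $C_j=\{x_g,x_h,x_i\}$, and add six new vertices $a_{g,j},a_{h,j},a_{i,j},a'_{g,j},a'_{h,j},a'_{i,j}$ with edges $x_ga_{g,j}$, $a_{g,j}C_j$, $x_ha_{h,j}$, $a_{h,j}C_j$, $x_ia_{i,j}$, $a_{i,j}C_j$, $\overline{x}_ga'_{g,j}$, $a'_{g,j}C_j'$, $\overline{x}_ha'_{h,j}$, $a'_{h,j}C_j'$, $\overline{x}_ia'_{i,j}$, $a'_{i,j}C_j'$, and lists $L(a_{g,j})=L(a'_{g,j})=\{1,4\}$, $L(a_{h,j})=L(a'_{h,j})=\{2,4\}$, $L(a_{i,j})=L(a'_{i,j})=\{3,4\}$. Then $G'$ is obtained from $G$ by adding a clique on five new vertices $k_1,\dots,k_5$ and adding an edge between $k_\ell$ and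 a vertex $u\in V(G)$ if and only if $\ell\notin L(u)$. A $5$-colouring is a map from vertices to $\{1,\dots,5\}$ giving adjacent vertices distinct colours. *)

(* Defs.v *)
From mathcomp Require Import all_boot.
Set Implicit Arguments. Unset Strict Implicit. Unset Printing Implicit Defensive.

(* Instance: n variables x_0..x_{n-1}, m clauses C_0..C_{m-1}.
   cl j t : 'I_n is the variable of the t-th literal (t = 0,1,2 ~ g,h,i)
   of clause C_j in the fixed order. All literals are positive. *)

Inductive gvert (n m : nat) : Type :=
  | VX  of 'I_n
  | VXb of 'I_n
  | VC  of 'I_m
  | VC' of 'I_m
  | VA  of 'I_m & 'I_3    (* a_{cl j t, j} *)
  | VA' of 'I_m & 'I_3.   (* a'_{cl j t, j} *)

Definition L n m (u : gvert n m) : seq nat :=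
  match u with
  | VX _ | VXb _ => [:: 4; 5]
  | VC _ | VC' _ => [:: 1; 2; 3]
  | VA _ t | VA' _ t => [:: t.+1; 4]
  end.

Definition gE n m (cl : 'I_m -> 'I_3 -> 'I_n) (u v : gvert n m) : bool :=
  match u, v with
  | VX i, VXb i' => i == i'
  | VX _, VC _ | VX _, VC' _ | VXb _, VC _ | VXb _, VC' _ => true
  | VX i, VA j t => cl j t == i
  | VA j t, VC j' => j == j'
  | VXb i, VA' j t => cl j t == i
  | VA' j t, VC' j' => j == j'
  | _, _ => false
  end.

Definition gadj n m (cl : 'I_m -> 'I_3 -> 'I_n) (u v : gvert n m) : bool :=
  gE cl u v || gE cl v u.

(* Vertices of G': old vertices of G plus the clique k_1..k_5
   (VK l stands for k_{l+1}). *)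
Inductive gpvert (n m : nat) : Type :=
  | Old of gvert n m
  | VK of 'I_5.

Definition gpadj n m (cl : 'I_m -> 'I_3 -> 'I_n) (u v : gpvert n m) : bool :=
  match u, v with
  | Old a, Old b => gadj cl a b
  | VK a, VK b => a != b
  | VK l, Old w | Old w, VK l => l.+1 \notin L w
  end.

Definition five_colouring n m (cl : 'I_m -> 'I_3 -> 'I_n)
    (c : gpvert n m -> nat) : Prop :=
  (forall v, 1 <= c v <= 5) /\ (forall u v, gpadj cl u v -> c u != c v).

Definition nae_assignment n m (cl : 'I_m -> 'I_3 -> 'I_n) (phi : 'I_n -> bool) :=
  forall j : 'I_m, (exists t, phi (cl j t)) /\ (exists t, ~~ phi (cl j t)).

(* Main.v *)
Require Import Defs.
From mathcomp Require Import all_boot zify.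
Set Implicit Arguments. Unset Strict Implicit.
Notation K l := (@VK _ _ l).
Notation X i := (@VX _ _ i).
Notation Xb i := (@VXb _ _ i).
Notation Cc j := (@VC _ _ j).
Notation Cc' j := (@VC' _ _ j).
Notation A j t := (@VA _ _ j t).
Notation A' j t := (@VA' _ _ j t).

Lemma key n m (cl : 'I_m -> 'I_3 -> 'I_n) c : five_colouring cl c ->
  forall u, exists2 k, k.+1 \in L u & c (Old u) = c (K (inord k)).
Proof.
case=> Hr Ha u.
pose f : 'I_5 -> 'I_5 := fun l => inord (c (K l)).-1.
have finj : injective f.
  move=> a b /(congr1 val).
  move: (Hr (K a)) (Hr (K b)) => /andP[? ?] /andP[? ?].
  rewrite /f /= !inordK; try lia.
  move=> e; apply/eqP; apply: contraT => nab.
  have /eqP[] := Ha _ _ (nab : gpadj cl (K a) (K b)).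
  lia.
case: (injF_bij finj) => g fg gf.
pose l := g (inord (c (Old u)).-1).
have el : c (K l) = c (Old u).
  have := gf (inord (c (Old u)).-1); rewrite /f -/l => /(congr1 val).
  move: (Hr (Old u)) (Hr (K l)) => /andP[? ?] /andP[? ?].
  rewrite /= !inordK; lia.
exists (val l); last by rewrite inord_val el.
apply: contraT => nl.
have := Ha _ _ (nl : gpadj cl (K l) (Old u)).
by rewrite el eqxx.
Qed.
Lemma back n m (cl : 'I_m -> 'I_3 -> 'I_n) c : five_colouring cl c ->
  exists phi : 'I_n -> bool, nae_assignment cl phi.
Proof.
move=> Hc; have Hk := key Hc; case: Hc => Hr Ha.
have adj u v : gpadj cl u v -> c u = c v -> False.
  by move=> /Ha /eqP.
exists (fun i => c (Old (X i)) == c (K (inord 3))) => j; split.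
- have [k /= hk ek] := Hk (Cc' j).
  have k3 : k < 3 by move: hk; rewrite !inE => /or3P[] /eqP[->].
  pose t : 'I_3 := inord k.
  have tk : (t : nat) = k by rewrite /t inordK.
  exists t.
  have [k' /= hk' ek'] := Hk (A' j t).
  have ea : c (Old (A' j t)) = c (K (inord 3)).
    move: hk'; rewrite !inE tk => /orP[] /eqP[] e; subst k'; last by [].
    by case: (adj (Old (A' j t)) (Old (Cc' j))); [rewrite /= /gadj /= eqxx | rewrite ?ek ?ek'].
  have [k2 /= hk2 ek2] := Hk (Xb (cl j t)).
  have exb : c (Old (Xb (cl j t))) = c (K (inord 4)).
    move: hk2; rewrite !inE => /orP[] /eqP[] e; subst k2; last by [].
    by case: (adj (Old (Xb (cl j t))) (Old (A' j t))); [rewrite /= /gadj /= eqxx | rewrite ?ek2 ?ea].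
  have [k3' /= hk3 ek3] := Hk (X (cl j t)).
  move: hk3; rewrite !inE => /orP[] /eqP[] e; subst k3'; first by rewrite ek3.
  by case: (adj (Old (X (cl j t))) (Old (Xb (cl j t)))); [rewrite /= /gadj /= eqxx | rewrite ?ek3 ?exb].
- have [k /= hk ek] := Hk (Cc j).
  have k3 : k < 3 by move: hk; rewrite !inE => /or3P[] /eqP[->].
  pose t : 'I_3 := inord k.
  have tk : (t : nat) = k by rewrite /t inordK.
  exists t.
  have [k' /= hk' ek'] := Hk (A j t).
  have ea : c (Old (A j t)) = c (K (inord 3)).
    move: hk'; rewrite !inE tk => /orP[] /eqP[] e; subst k'; last by [].
    by case: (adj (Old (A j t)) (Old (Cc j))); [rewrite /= /gadj /= eqxx | rewrite ?ek ?ek'].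
  apply/negP => /eqP e.
  by case: (adj (Old (X (cl j t))) (Old (A j t))); [rewrite /= /gadj /= eqxx | rewrite ?e ?ea].
Qed.
Definition ftd n m (cl : 'I_m -> 'I_3 -> 'I_n) (phi : 'I_n -> bool) j :=
  odflt ord0 [pick t | ~~ phi (cl j t)].
Definition ttd n m (cl : 'I_m -> 'I_3 -> 'I_n) (phi : 'I_n -> bool) j :=
  odflt ord0 [pick t | phi (cl j t)].
Lemma fwd n m (cl : 'I_m -> 'I_3 -> 'I_n) phi : nae_assignment cl phi ->
  exists c : gpvert n m -> nat, five_colouring cl c.
Proof.
move=> Hp.
pose ft := ftd cl phi.
pose tt := ttd cl phi.
have Hft j : ~~ phi (cl j (ft j)).
  rewrite /ft /ftd; case: pickP => [t //|H].
  by case: (Hp j) => _ [t]; rewrite H.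
have Htt j : phi (cl j (tt j)).
  rewrite /tt /ttd; case: pickP => [t //|H].
  by case: (Hp j) => [[t]]; rewrite H.
pose c0 (u : gvert n m) : nat := match u with
  | VX i => if phi i then 4 else 5
  | VXb i => if phi i then 5 else 4
  | VC j => (ft j).+1
  | VC' j => (tt j).+1
  | VA j t => if phi (cl j t) then t.+1 else 4
  | VA' j t => if phi (cl j t) then 4 else t.+1
  end.
pose c (u : gpvert n m) : nat := match u with
  | Old w => c0 w | VK l => l.+1 end.
have cL w : c0 w \in L w.
  case: w => [i|i|j|j|j t|j t] /=; rewrite ?inE.
  - by case: (phi i).
  - by case: (phi i).
  - by case: (ft j) => [[|[|[|]]]].
  - by case: (tt j) => [[|[|[|]]]].
  - by case: (phi _); rewrite eqxx ?orbT.
  - by case: (phi _); rewrite eqxx ?orbT.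
have hA j t : (if phi (cl j t) then t.+1 else 4) != (ft j).+1.
  case E: (phi (cl j t)); last by case: (ft j) => [[|[|[|]]] ?].
  by apply/eqP => -[/val_inj e]; move: (Hft j); rewrite -e E.
have hA' j t : (if phi (cl j t) then 4 else t.+1) != (tt j).+1.
  case E: (phi (cl j t)); first by case: (tt j) => [[|[|[|]]] ?].
  by apply/eqP => -[/val_inj e]; move: (Htt j); rewrite -e E.
have hOld w w' : gadj cl w w' -> c0 w != c0 w'.
  rewrite /gadj.
  case: w => [i|i|j|j|j t|j t]; case: w' => [i'|i'|j'|j'|j' t'|j' t'] //=;
  rewrite ?orbF //=.
  all: try (move/eqP=> e; subst).
  all: try (exact: hA); try (rewrite eq_sym; exact: hA); try (exact: hA'); try (rewrite eq_sym; exact: hA').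
  all: do 2 try (match goal with |- context[if ?x then _ else _] => case: x end).
  all: do 3 try (match goal with |- context[@nat_of_ord 3 ?y] => case: y => [[|[|[|]]] ?] /= end).
  all: try done.
exists c; split.
- case=> [w|l] /=; last by case: l => [[|[|[|[|[|]]]]]].
  have hL : all (fun x => 0 < x <= 5) (L w).
    by case: w => [i|i|j|j|j [[|[|[|]]] ?]|j [[|[|[|]]] ?]].
  exact: (allP hL _ (cL w)).
- case=> [w|l] [w'|l'] /=.
  + exact: hOld.
  + by move=> h; apply/eqP => e; move: h; rewrite -e cL.
  + by move=> h; apply/eqP => e; move: h; rewrite e cL.
  + by apply: contra => /eqP [] /val_inj ->.
Qed.

Theorem lemma2 (n m : nat) (cl : 'I_m -> 'I_3 -> 'I_n)
  (Hdistinct : forall j : 'I_m, injective (cl j)) :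
  (exists phi : 'I_n -> bool, nae_assignment cl phi) <->
  (exists c : gpvert n m -> nat, five_colouring cl c).
Proof.
split; [case=> phi; exact: fwd | case=> c; exact: back].
Qed.
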